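(* Let $A$ be a coherent commutative ring. Then $A$ is an fqp-ring if and only if $A_P$ is an fqp-ring for each maximal ideal $P$ of $A$.
   Context: A ring is coherent if all its finitely generated ideals are finitely presented. A module $V$ is quasi-projective if the natural map $\mathrm{Hom}(V,V)\to\mathrm{Hom}(V,V/X)$ is surjective for every submodule $X$ of $V$; a ring is an fqp-ring if every finitely generated ideal is quasi-projective. *)

(* Defs.v *)
From HB Require Import structures.
From mathcomp Require Import all_boot all_order all_algebra.
Set Implicit Arguments. Unset Strict Implicit. Unset Printing Implicit Defensive.
Import GRing.Theory.
Local Open Scope ring_scope.

Definition is_ideal (R : comNzRingType) (I : R -> Prop) : Prop :=
  [/\ I 0, (forall x y, I x -> I y -> I (x + y)) & (forall a x, I x -> I (a * x))].

Definition maximal_ideal (R : comNzRingType) (P : R -> Prop) : Prop :=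
  [/\ is_ideal P, ~ P 1 &
      forall J : R -> Prop, is_ideal J -> (forall x, P x -> J x) ->
        (forall x, J x -> P x) \/ J 1].

Definition ideal_span (R : comNzRingType) (n : nat) (s : 'I_n -> R) (x : R) : Prop :=
  exists c : 'I_n -> R, x = \sum_(i < n) c i * s i.

Definition fg_ideal (R : comNzRingType) (I : R -> Prop) : Prop :=
  exists n (s : 'I_n -> R), forall x, I x <-> ideal_span s x.

(* I is finitely presented: there are generators s_0..s_{n-1} of I such that
   the kernel of R^n -> I, (v_i) |-> sum v_i s_i, is a finitely generated
   submodule of R^n, i.e. an exact sequence R^m -> R^n -> I -> 0 exists. *)
Definition fp_ideal (R : comNzRingType) (I : R -> Prop) : Prop :=
  exists n (s : 'I_n -> R),
    (forall x, I x <-> ideal_span s x) /\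
    exists m (k : 'I_m -> 'I_n -> R),
      forall v : 'I_n -> R,
        (\sum_(i < n) v i * s i = 0) <->
        exists c : 'I_m -> R, forall i, v i = \sum_(j < m) c j * k j i.

Definition coherent (R : comNzRingType) : Prop :=
  forall I : R -> Prop, is_ideal I -> fg_ideal I -> fp_ideal I.

(* The ideal V, viewed as an R-module, is quasi-projective: for every
   submodule X of V, every R-linear map h : V -> V/X is of the form pi o f
   with f : V -> V R-linear (pi : V -> V/X the projection).
   A linear map h : V -> V/X is represented by a set-theoretic lift
   g : V -> V (g v is a representative of h v); R-linearity of h is exactly
   linearity of g modulo X, and pi o f = h means f v - g v \in X. *)
Definition quasi_projective_ideal (R : comNzRingType) (V : R -> Prop) : Prop :=
  forall X : R -> Prop, is_ideal X -> (forall x, X x -> V x) ->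
  forall g : R -> R,
    (forall v, V v -> V (g v)) ->
    (forall a u v, V u -> V v -> X (g (a * u + v) - (a * g u + g v))) ->
    exists f : R -> R,
      [/\ (forall v, V v -> V (f v)),
          (forall a u v, V u -> V v -> f (a * u + v) = a * f u + f v) &
          (forall v, V v -> X (f v - g v))].

Definition fqp_ring (R : comNzRingType) : Prop :=
  forall I : R -> Prop, is_ideal I -> fg_ideal I -> quasi_projective_ideal I.

(* phi : R -> B is a localization of R at the prime P, i.e. B = R_P
   (characterized up to unique isomorphism by these three properties):
   images of elements outside P are units, every element of B is a fraction
   phi a / phi s with s outside P, and the kernel of phi consists of the
   elements annihilated by some s outside P. *)
Definition is_localization_at (R : comNzRingType) (P : R -> Prop)
    (B : comNzRingType) (phi : {rmorphism R -> B}) : Prop :=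
  [/\ (forall s, ~ P s -> exists t, phi s * t = 1),
      (forall b, exists a s, ~ P s /\ b * phi s = phi a) &
      (forall a, phi a = 0 -> exists s, ~ P s /\ s * a = 0)].

(* Main.v *)
Require Import Defs.
From HB Require Import structures.
From mathcomp Require Import all_boot all_order all_algebra.
From mathcomp Require Import boolp classical_sets.
From mathcomp Require Import ring.
Set Implicit Arguments. Unset Strict Implicit. Unset Printing Implicit Defensive.
Import GRing.Theory.
Local Open Scope ring_scope.

Record mset (A : comNzRingType) := MSet {
  msP : A -> Prop;
  ms1 : ~ msP 1;
  msM : forall s t, ~ msP s -> ~ msP t -> ~ msP (s * t);
  ms0 : msP 0 }.

Record frac (A : comNzRingType) (S : mset A) := Frac {
  fnum : A; fden : A; fdenP : ~ msP S fden }.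

Arguments fdenP {A S} f : rename.
Arguments ms1 {A} S : rename.
Definition frel (A : comNzRingType) (S : mset A) (x y : frac S) : Prop :=
  exists u, ~ msP S u /\ u * (fnum x * fden y - fnum y * fden x) = 0.

Section LocTheory.
Variables (A : comNzRingType) (S : mset A).
Local Notation frac := (frac S).
Local Notation frel := (@frel A S).

Lemma frel_refl x : frel x x.
Proof. by exists 1; split; [exact: ms1|]; rewrite subrr mulr0. Qed.

Lemma frel_sym x y : frel x y -> frel y x.
Proof. by move=> [u [hu e]]; exists u; split=> //; rewrite -opprB mulrN e oppr0. Qed.

Lemma frel_trans x y z : frel x y -> frel y z -> frel x z.
Proof.
move=> [u [hu e1]] [v [hv e2]]; exists (u * v * fden y); split.
  by apply: msM; [apply: msM|apply: fdenP].
have -> : u * v * fden y * (fnum x * fden z - fnum z * fden x) =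
  v * fden z * (u * (fnum x * fden y - fnum y * fden x)) +
  u * fden x * (v * (fnum y * fden z - fnum z * fden y)) by ring.
by rewrite e1 e2 !mulr0 addr0.
Qed.

Lemma frel_eq x y : fnum x * fden y = fnum y * fden x -> frel x y.
Proof. by move=> e; exists 1; split; [exact: ms1|]; rewrite e subrr mulr0. Qed.

Lemma frel_of x y x' y' c :
  fnum x' * fden y' - fnum y' * fden x' = c * (fnum x * fden y - fnum y * fden x) ->
  frel x y -> frel x' y'.
Proof.
by move=> e [u [hu e1]]; exists u; split=> //; rewrite e mulrCA e1 mulr0.
Qed.

End LocTheory.

Definition fadd (A : comNzRingType) (S : mset A) (x y : frac S) : frac S :=
  Frac (fnum x * fden y + fnum y * fden x) (msM (fdenP x) (fdenP y)).
Definition fmul (A : comNzRingType) (S : mset A) (x y : frac S) : frac S :=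
  Frac (fnum x * fnum y) (msM (fdenP x) (fdenP y)).
Definition fopp (A : comNzRingType) (S : mset A) (x : frac S) : frac S :=
  Frac (- fnum x) (fdenP x).
Definition fcst (A : comNzRingType) (S : mset A) (a : A) : frac S :=
  Frac a (ms1 S).

Definition loc (A : comNzRingType) (S : mset A) : Type :=
  {X : frac S -> Prop | exists x, X = frel x}.

HB.instance Definition _ (A : comNzRingType) (S : mset A) := gen_eqMixin (loc S).
HB.instance Definition _ (A : comNzRingType) (S : mset A) := gen_choiceMixin (loc S).

Definition lpi (A : comNzRingType) (S : mset A) (x : frac S) : loc S :=
  exist _ (frel x) (ex_intro _ x erefl).
Definition lrep (A : comNzRingType) (S : mset A) (q : loc S) : frac S :=
  proj1_sig (cid (proj2_sig q)).

Lemma lpiK (A : comNzRingType) (S : mset A) (q : loc S) : lpi (lrep q) = q.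
Proof.
rewrite /lrep; case: q => X hX /=; case: (cid hX) => x /= e.
by apply: eq_exist.
Qed.

Lemma lpi_eq (A : comNzRingType) (S : mset A) (x y : frac S) :
  lpi x = lpi y <-> frel x y.
Proof.
split.
  move=> e; have : proj1_sig (lpi x) y by rewrite e; exact: frel_refl.
  exact.
move=> h; apply: eq_exist; apply: funext => z; apply: propext; split.
  by move=> h2; apply: frel_trans (frel_sym h) h2.
by move=> h2; apply: frel_trans h h2.
Qed.

Lemma lpi_ind (A : comNzRingType) (S : mset A) (Q : loc S -> Prop) :
  (forall x, Q (lpi x)) -> forall q, Q q.
Proof. by move=> h q; rewrite -(lpiK q). Qed.

Definition ladd (A : comNzRingType) (S : mset A) (p q : loc S) : loc S :=
  lpi (fadd (lrep p) (lrep q)).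
Definition lmul (A : comNzRingType) (S : mset A) (p q : loc S) : loc S :=
  lpi (fmul (lrep p) (lrep q)).
Definition lopp (A : comNzRingType) (S : mset A) (p : loc S) : loc S :=
  lpi (fopp (lrep p)).
Definition lzero (A : comNzRingType) (S : mset A) : loc S := lpi (fcst S 0).
Definition lone (A : comNzRingType) (S : mset A) : loc S := lpi (fcst S 1).

Lemma lrepE (A : comNzRingType) (S : mset A) (x : frac S) : frel (lrep (lpi x)) x.
Proof. by apply/lpi_eq; rewrite lpiK. Qed.

Lemma laddE (A : comNzRingType) (S : mset A) (x y : frac S) :
  ladd (lpi x) (lpi y) = lpi (fadd x y).
Proof.
apply/lpi_eq; set x' := lrep _; set y' := lrep _.
have hx : frel x' x by exact: lrepE.
have hy : frel y' y by exact: lrepE.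
apply: (@frel_trans _ _ _ (fadd x y' ) _).
  apply: (frel_of (c := fden y' * fden y')) hx; rewrite /=; ring.
apply: (frel_of (c := fden x * fden x)) hy; rewrite /=; ring.
Qed.

Lemma lmulE (A : comNzRingType) (S : mset A) (x y : frac S) :
  lmul (lpi x) (lpi y) = lpi (fmul x y).
Proof.
apply/lpi_eq; set x' := lrep _; set y' := lrep _.
have hx : frel x' x by exact: lrepE.
have hy : frel y' y by exact: lrepE.
apply: (@frel_trans _ _ _ (fmul x y' ) _).
  apply: (frel_of (c := fnum y' * fden y')) hx; rewrite /=; ring.
apply: (frel_of (c := fnum x * fden x)) hy; rewrite /=; ring.
Qed.

Lemma loppE (A : comNzRingType) (S : mset A) (x : frac S) :
  lopp (lpi x) = lpi (fopp x).
Proof.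
apply/lpi_eq; have hx : frel (lrep (lpi x)) x by exact: lrepE.
apply: (frel_of (c := -1)) hx; rewrite /=; ring.
Qed.

Section LocRing.
Variables (A : comNzRingType) (S : mset A).
Local Notation L := (loc S).

Lemma laddA : associative (@ladd A S).
Proof.
elim/lpi_ind=> x; elim/lpi_ind=> y; elim/lpi_ind=> z; rewrite !laddE.
by apply/lpi_eq/frel_eq => /=; ring.
Qed.
Lemma laddC : commutative (@ladd A S).
Proof.
elim/lpi_ind=> x; elim/lpi_ind=> y; rewrite !laddE.
by apply/lpi_eq/frel_eq => /=; ring.
Qed.
Lemma ladd0 : left_id (lzero S) (@ladd A S).
Proof.
elim/lpi_ind=> x; rewrite /lzero !laddE.
by apply/lpi_eq/frel_eq => /=; ring.
Qed.
Lemma laddN : left_inverse (lzero S) (@lopp A S) (@ladd A S).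
Proof.
elim/lpi_ind=> x; rewrite /lzero loppE !laddE.
by apply/lpi_eq/frel_eq => /=; ring.
Qed.


Lemma lmulA : associative (@lmul A S).
Proof.
elim/lpi_ind=> x; elim/lpi_ind=> y; elim/lpi_ind=> z; rewrite !lmulE.
by apply/lpi_eq/frel_eq => /=; ring.
Qed.
Lemma lmulC : commutative (@lmul A S).
Proof.
elim/lpi_ind=> x; elim/lpi_ind=> y; rewrite !lmulE.
by apply/lpi_eq/frel_eq => /=; ring.
Qed.
Lemma lmul1 : left_id (lone S) (@lmul A S).
Proof.
elim/lpi_ind=> x; rewrite /lone !lmulE.
by apply/lpi_eq/frel_eq => /=; ring.
Qed.
Lemma lmulDl : left_distributive (@lmul A S) (@ladd A S).
Proof.
elim/lpi_ind=> x; elim/lpi_ind=> y; elim/lpi_ind=> z; rewrite laddE !lmulE laddE.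
by apply/lpi_eq/frel_eq => /=; ring.
Qed.
Lemma lone0 : lone S != lzero S.
Proof.
apply/eqP; rewrite /lone /lzero => /lpi_eq [u [hu]] /=.
by rewrite !mulr1 subr0 mulr1 => e; apply: hu; rewrite e; exact: ms0.
Qed.

End LocRing.

HB.instance Definition _ (A : comNzRingType) (S : mset A) :=
  GRing.isZmodule.Build (loc S) (@laddA A S) (@laddC A S) (@ladd0 A S) (@laddN A S).
HB.instance Definition _ (A : comNzRingType) (S : mset A) :=
  GRing.Zmodule_isComNzRing.Build (loc S) (@lmulA A S) (@lmulC A S) (@lmul1 A S)
    (@lmulDl A S) (@lone0 A S).

Definition lphi (A : comNzRingType) (S : mset A) (a : A) : loc S := lpi (fcst S a).

Lemma lphi_zmod (A : comNzRingType) (S : mset A) : zmod_morphism (@lphi A S).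
Proof.
move=> x y; rewrite /lphi; change (lpi (fcst S (x - y)) =
  ladd (lpi (fcst S x)) (lopp (lpi (fcst S y)))).
rewrite loppE laddE; apply/lpi_eq/frel_eq => /=; ring.
Qed.
Lemma lphi_mon (A : comNzRingType) (S : mset A) : monoid_morphism (@lphi A S).
Proof.
split=> //= x y; rewrite /lphi; change (lpi (fcst S (x * y)) =
  lmul (lpi (fcst S x)) (lpi (fcst S y))).
rewrite lmulE; apply/lpi_eq/frel_eq => /=; ring.
Qed.

HB.instance Definition _ (A : comNzRingType) (S : mset A) :=
  GRing.isZmodMorphism.Build A (loc S) (@lphi A S) (@lphi_zmod A S).
HB.instance Definition _ (A : comNzRingType) (S : mset A) :=
  GRing.isMonoidMorphism.Build A (loc S) (@lphi A S) (@lphi_mon A S).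

Definition lphiR (A : comNzRingType) (S : mset A) : {rmorphism A -> loc S} := @lphi A S.

Lemma lphi_loc (A : comNzRingType) (S : mset A) :
  is_localization_at (msP S) (lphiR S).
Proof.
split.
- move=> s hs; exists (lpi (Frac 1 hs)); rewrite /= /lphi.
  change (lmul (lpi (fcst S s)) (lpi (Frac 1 hs)) = lpi (fcst S 1)).
  by rewrite lmulE; apply/lpi_eq/frel_eq => /=; ring.
- elim/lpi_ind=> x; exists (fnum x), (fden x); split; first exact: fdenP.
  rewrite /= /lphi; change (lmul (lpi x) (lpi (fcst S (fden x))) = lpi (fcst S (fnum x))).
  by rewrite lmulE; apply/lpi_eq/frel_eq => /=; ring.
- move=> a e0; have /lpi_eq [u [hu e]] : lpi (fcst S a) = lpi (fcst S 0) := e0.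
  exists u; split=> //.
  by move: e => /=; rewrite !mulr1 subr0.
Qed.
Section Ideals.
Variable R : comNzRingType.
Implicit Types (I V X : R -> Prop).

Lemma ideal0 I : is_ideal I -> I 0.
Proof. by case. Qed.
Lemma idealD I x y : is_ideal I -> I x -> I y -> I (x + y).
Proof. by case=> _ h _; apply: h. Qed.
Lemma idealM I a x : is_ideal I -> I x -> I (a * x).
Proof. by case=> _ _ h; apply: h. Qed.
Lemma idealMr I a x : is_ideal I -> I x -> I (x * a).
Proof. by move=> hI hx; rewrite mulrC; apply: idealM. Qed.
Lemma idealN I x : is_ideal I -> I x -> I (- x).
Proof. by move=> hI hx; rewrite -mulN1r; apply: idealM. Qed.
Lemma idealB I x y : is_ideal I -> I x -> I y -> I (x - y).
Proof. by move=> hI hx hy; apply: idealD => //; apply: idealN. Qed.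

Lemma ideal_sum I (T : Type) (r : seq T) (P : pred T) (F : T -> R) :
  is_ideal I -> (forall i, P i -> I (F i)) -> I (\sum_(i <- r | P i) F i).
Proof.
move=> hI hF; apply: big_ind => //; first exact: ideal0.
by move=> x y; apply: idealD.
Qed.

Lemma span_ideal n (s : 'I_n -> R) : is_ideal (ideal_span s).
Proof.
split.
- by exists (fun _ => 0); rewrite big1 // => i _; rewrite mul0r.
- move=> x y [c1 ->] [c2 ->]; exists (fun i => c1 i + c2 i).
  by rewrite -big_split /=; apply: eq_bigr => i _; rewrite mulrDl.
- move=> a x [c ->]; exists (fun i => a * c i).
  by rewrite mulr_sumr; apply: eq_bigr => i _; rewrite mulrA.
Qed.

Lemma sum_delta n (y : 'I_n -> R) (i : 'I_n) :
  \sum_(l < n) (l == i)%:R * y l = y i.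
Proof.
rewrite (bigD1 i) //= eqxx mul1r big1 ?addr0 // => j /negbTE ->.
by rewrite mul0r.
Qed.

Lemma span_gen n (s : 'I_n -> R) i : ideal_span s (s i).
Proof. by exists (fun l => (l == i)%:R); rewrite sum_delta. Qed.

Lemma span_sub I n (s : 'I_n -> R) x :
  is_ideal I -> (forall i, I (s i)) -> ideal_span s x -> I x.
Proof.
move=> hI hs [c ->]; apply: ideal_sum => // i _; exact: idealM.
Qed.

Definition kerK n (s : 'I_n -> R) m (K : 'I_m -> 'I_n -> R) :=
  forall v : 'I_n -> R,
    (\sum_(i < n) v i * s i = 0) <->
    exists c : 'I_m -> R, forall i, v i = \sum_(j < m) c j * K j i.

Lemma ker_row n (s : 'I_n -> R) m (K : 'I_m -> 'I_n -> R) j :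
  kerK s K -> \sum_(i < n) K j i * s i = 0.
Proof.
move=> hK; apply/hK; exists (fun l => (l == j)%:R) => i.
by rewrite (sum_delta (fun l => K l i)).
Qed.

Lemma ker_apply n (s : 'I_n -> R) m (K : 'I_m -> 'I_n -> R) (d : 'I_n -> R) :
  kerK s K -> \sum_(i < n) d i * s i = 0 ->
  exists c : 'I_m -> R, forall w : 'I_n -> R,
    \sum_(i < n) d i * w i = \sum_(j < m) c j * (\sum_(i < n) K j i * w i).
Proof.
move=> hK /hK [c hc]; exists c => w.
under eq_bigr do rewrite hc mulr_suml.
rewrite exchange_big /=; apply: eq_bigr => j _; rewrite mulr_sumr.
by apply: eq_bigr => i _; rewrite mulrA.
Qed.

Definition coefs n (s : 'I_n -> R) (x : R) : 'I_n -> R :=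
  match pselect (ideal_span s x) with
  | left h => proj1_sig (cid h)
  | right _ => fun _ => 0
  end.

Lemma coefsE n (s : 'I_n -> R) x :
  ideal_span s x -> x = \sum_(i < n) coefs s x i * s i.
Proof.
rewrite /coefs; case: pselect => // h _; by case: (cid h).
Qed.

Lemma sum_diff n (s c c' : 'I_n -> R) :
  \sum_(i < n) (c i - c' i) * s i =
  \sum_(i < n) c i * s i - \sum_(i < n) c' i * s i.
Proof. by rewrite -sumrB; apply: eq_bigr => i _; rewrite mulrBl. Qed.

End Ideals.

Section QP.
Variable R : comNzRingType.

Lemma lin_sum (V : R -> Prop) (f : R -> R) (T : Type) (s : T -> R) :
  is_ideal V -> (forall i, V (s i)) ->
  (forall a u v, V u -> V v -> f (a * u + v) = a * f u + f v) ->
  forall (r : seq T) (c : T -> R),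
    f (\sum_(i <- r) c i * s i) = \sum_(i <- r) c i * f (s i).
Proof.
move=> hV hs hf; elim=> [|i r IH] c.
  rewrite !big_nil; have := hf 1 0 0 (ideal0 hV) (ideal0 hV).
  rewrite !mul1r addr0 => e; rewrite -[LHS]addr0 in e.
  by symmetry; exact: (addrI _ e).
rewrite !big_cons hf ?IH //; apply: ideal_sum => // l _; exact: idealM.
Qed.

Lemma qp_to (V : R -> Prop) n (s : 'I_n -> R) m (K : 'I_m -> 'I_n -> R) :
  is_ideal V -> (forall x, V x <-> ideal_span s x) -> kerK s K ->
  quasi_projective_ideal V ->
  forall X : R -> Prop, is_ideal X -> (forall x, X x -> V x) ->
  forall y : 'I_n -> R, (forall i, V (y i)) ->
  (forall j, X (\sum_(i < n) K j i * y i)) ->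
  exists w : 'I_n -> R,
    [/\ (forall i, V (w i)), (forall j, \sum_(i < n) K j i * w i = 0) &
        (forall i, X (w i - y i))].
Proof.
move=> hV hVs hK hqp X hX hXV y hy hKy.
have hs i : V (s i) by apply/hVs; exact: span_gen.
have kerX (d : 'I_n -> R) : \sum_(i < n) d i * s i = 0 ->
    X (\sum_(i < n) d i * y i).
  move=> /(ker_apply hK) [c ->]; apply: ideal_sum => // j _; exact: idealM.
pose g x := \sum_(i < n) coefs s x i * y i.
have lin_mod x (c : 'I_n -> R) : x = \sum_(i < n) c i * s i ->
    X (g x - \sum_(i < n) c i * y i).
  move=> ex; rewrite /g -sum_diff; apply: kerX; rewrite sum_diff.
  have hx : ideal_span s x by exists c.
  by rewrite -(coefsE hx) -ex subrr.
have hgV : forall v, V v -> V (g v).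
  by move=> v _; apply: ideal_sum => // i _; exact: idealM.
have hglin : forall a u v, V u -> V v -> X (g (a * u + v) - (a * g u + g v)).
  move=> a u v hu hv.
  have -> : a * g u + g v =
    \sum_(i < n) (a * coefs s u i + coefs s v i) * y i.
    rewrite /g mulr_sumr -big_split /=; apply: eq_bigr => i _.
    by rewrite mulrDl mulrA.
  apply: lin_mod.
  rewrite {1}(coefsE (proj1 (hVs u) hu)) {1}(coefsE (proj1 (hVs v) hv)).
  rewrite mulr_sumr -big_split /=; apply: eq_bigr => i _.
  by rewrite mulrDl mulrA.

have [f [hfV hflin hfX]] := hqp X hX hXV g hgV hglin.
exists (fun i => f (s i)); split.
  - by move=> i; apply: hfV.
  - move=> j; rewrite -(lin_sum hV hs hflin) (ker_row _ hK).
    have := hflin 1 0 0 (ideal0 hV) (ideal0 hV).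
    rewrite !mul1r addr0 => e; rewrite -[LHS]addr0 in e.
    by symmetry; exact: (addrI _ e).
  - move=> i; have -> : f (s i) - y i = (f (s i) - g (s i)) + (g (s i) - y i).
      by rewrite addrA subrK.
    apply: idealD => //; first exact: hfX.
    rewrite -(sum_delta y i); apply: lin_mod.
    by rewrite (sum_delta s i).
Qed.

Lemma qp_from (V : R -> Prop) n (s : 'I_n -> R) m (K : 'I_m -> 'I_n -> R) :
  is_ideal V -> (forall x, V x <-> ideal_span s x) -> kerK s K ->
  (forall X : R -> Prop, is_ideal X -> (forall x, X x -> V x) ->
   forall y : 'I_n -> R, (forall i, V (y i)) ->
   (forall j, X (\sum_(i < n) K j i * y i)) ->
   exists w : 'I_n -> R,
    [/\ (forall i, V (w i)), (forall j, \sum_(i < n) K j i * w i = 0) &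
        (forall i, X (w i - y i))]) ->
  quasi_projective_ideal V.
Proof.
move=> hV hVs hK H X hX hXV g hgV hglin.
have hs i : V (s i) by apply/hVs; exact: span_gen.
have hg0 : X (g 0).
  have := hglin (-1) 0 0 (ideal0 hV) (ideal0 hV).
  by rewrite mulr0 addr0 mulN1r addNr subr0.
have gsum (T : Type) (s' : T -> R) : (forall i, V (s' i)) ->
    forall (r : seq T) (c : T -> R),
    X (g (\sum_(i <- r) c i * s' i) - \sum_(i <- r) c i * g (s' i)).
  move=> hs'; elim=> [|i r IH] c; first by rewrite !big_nil subr0.
  rewrite !big_cons.
  have hr : V (\sum_(j <- r) c j * s' j).
    by apply: ideal_sum => // l _; exact: idealM.
  have -> : g (c i * s' i + \sum_(j <- r) c j * s' j) -
      (c i * g (s' i) + \sum_(j <- r) c j * g (s' j)) =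
    (g (c i * s' i + \sum_(j <- r) c j * s' j) -
      (c i * g (s' i) + g (\sum_(j <- r) c j * s' j))) +
    (g (\sum_(j <- r) c j * s' j) - \sum_(j <- r) c j * g (s' j)).
    by ring.
  apply: (idealD hX); [exact: hglin | exact: IH].
pose y i := g (s i).
have hy i : V (y i) by apply: hgV.
have hKy j : X (\sum_(i < n) K j i * y i).
  have := gsum _ _ hs (index_enum _) (K j).
  rewrite (ker_row _ hK) => h.
  have -> : \sum_(i < n) K j i * y i = g 0 - (g 0 - \sum_(i < n) K j i * y i).
    by rewrite opprB addrC subrK.
  by apply: idealB.
have [w [hwV hKw hwX]] := H X hX hXV y hy hKy.
pose f x := \sum_(i < n) coefs s x i * w i.
have hker (d : 'I_n -> R) : \sum_(i < n) d i * s i = 0 ->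
    \sum_(i < n) d i * w i = 0.
  move=> /(ker_apply hK) [c ->]; rewrite big1 // => j _; by rewrite hKw mulr0.
exists f; split.
- by move=> v _; apply: ideal_sum => // i _; exact: idealM.
- move=> a u v hu hv; apply/eqP; rewrite -subr_eq0; apply/eqP.
  have -> : a * f u + f v =
      \sum_(i < n) (a * coefs s u i + coefs s v i) * w i.
    rewrite /f mulr_sumr -big_split /=; apply: eq_bigr => i _.
    by rewrite mulrDl mulrA.
  rewrite /f -sum_diff; apply: hker; rewrite sum_diff.
  have hx : ideal_span s (a * u + v) by apply/hVs; apply: idealD => //; exact: idealM.
  rewrite -(coefsE hx) {1}(coefsE (proj1 (hVs u) hu)) {1}(coefsE (proj1 (hVs v) hv)).
  rewrite mulr_sumr -big_split /= -sumrB big1 // => i _.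
  by rewrite mulrDl mulrA subrr.
- move=> v hv.
  have ev := coefsE (proj1 (hVs v) hv).
  have := gsum _ _ hs (index_enum _) (coefs s v); rewrite -ev => h.
  have -> : f v - g v = \sum_(i < n) coefs s v i * (w i - y i) -
      (g v - \sum_(i < n) coefs s v i * g (s i)).
    have -> : \sum_(i < n) coefs s v i * (w i - y i) =
      \sum_(i < n) coefs s v i * w i - \sum_(i < n) coefs s v i * y i.
      by rewrite -sumrB; apply: eq_bigr => i _; rewrite mulrBr.
    rewrite /f /y; ring.
  apply: idealB => //; apply: ideal_sum => // i _; exact: idealM.
Qed.

End QP.

Section Localize.
Variables (A B : comNzRingType) (phi : {rmorphism A -> B}) (P : A -> Prop).
Hypothesis hP1 : ~ P 1.
Hypothesis hPM : forall s t, ~ P s -> ~ P t -> ~ P (s * t).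
Hypothesis hloc : is_localization_at P phi.

Lemma loc_unit s : ~ P s -> exists t, phi s * t = 1.
Proof. by case: hloc => h _ _; apply: h. Qed.
Lemma loc_frac b : exists a s, ~ P s /\ b * phi s = phi a.
Proof. by case: hloc => _ h _; apply: h. Qed.
Lemma loc_ker0 a : phi a = 0 -> exists s, ~ P s /\ s * a = 0.
Proof. by case: hloc => _ _ h; apply: h. Qed.

Lemma common_den n (Q : 'I_n -> A -> Prop) :
  (forall i, exists t, ~ P t /\ Q i t) ->
  (forall i r t, Q i t -> Q i (r * t)) ->
  exists T, ~ P T /\ forall i, Q i T.
Proof.
move=> hex hQ; have [tf htf] := choice hex.
exists (\prod_(i < n) tf i); split.
  apply: (big_ind (fun x => ~ P x)); first exact: hP1.
    by move=> x y; apply: hPM.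
  by move=> i _; case: (htf i).
move=> i; rewrite (bigD1 i) //= mulrC; apply: hQ; by case: (htf i).
Qed.

Lemma span_map n (s : 'I_n -> A) x :
  ideal_span s x -> ideal_span (fun i => phi (s i)) (phi x).
Proof.
move=> [c ->]; exists (fun i => phi (c i)); rewrite rmorph_sum.
by apply: eq_bigr => i _; rewrite rmorphM.
Qed.

Definition img (I : A -> Prop) : B -> Prop :=
  fun b => exists x t, [/\ I x, ~ P t & b * phi t = phi x].

Lemma img_ideal I : is_ideal I -> is_ideal (img I).
Proof.
move=> hI; split.
- by exists 0, 1; split=> //; [exact: ideal0 | rewrite !rmorph0 mul0r].
- move=> b1 b2 [x1 [t1 [h1 ht1 e1]]] [x2 [t2 [h2 ht2 e2]]].
  exists (x1 * t2 + x2 * t1), (t1 * t2); split.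
  + by apply: idealD => //; exact: idealMr.
  + exact: hPM.
  + by rewrite rmorphD !rmorphM -e1 -e2; ring.
- move=> c b [x [t [h ht e]]].
  have [a [r [hr er]]] := loc_frac c.
  exists (a * x), (r * t); split.
  + exact: idealM.
  + exact: hPM.
  + by rewrite !rmorphM -e -er; ring.
Qed.

Lemma img_phi (I : A -> Prop) x : I x -> img I (phi x).
Proof. by move=> h; exists x, 1; split=> //; rewrite rmorph1 mulr1. Qed.

Lemma span_img (V : A -> Prop) n (s : 'I_n -> A) b :
  is_ideal V -> (forall x, V x <-> ideal_span s x) ->
  ideal_span (fun i => phi (s i)) b -> img V b.
Proof.
move=> hV hVs; apply: span_sub; first exact: img_ideal.
move=> i; apply: img_phi; apply/hVs; exact: span_gen.
Qed.

Lemma img_span (V : A -> Prop) n (s : 'I_n -> A) b :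
  (forall x, V x <-> ideal_span s x) ->
  img V b -> ideal_span (fun i => phi (s i)) b.
Proof.
move=> hVs [x [t [hx ht e]]]; have [u hu] := loc_unit ht.
have -> : b = u * phi x by rewrite -e mulrC -mulrA hu mulr1.
apply: idealM; first exact: span_ideal.
by apply: span_map; apply/hVs.
Qed.

Lemma loc_ker n (s : 'I_n -> A) m (K : 'I_m -> 'I_n -> A) :
  kerK s K -> kerK (fun i => phi (s i)) (fun j i => phi (K j i)).
Proof.
move=> hK v; split; last first.
  move=> [c hc]; under eq_bigr do rewrite hc mulr_suml.
  rewrite exchange_big /= big1 // => j _.
  transitivity (c j * phi (\sum_(i < n) K j i * s i)); last first.
    by rewrite (ker_row j hK) rmorph0 mulr0.
  rewrite rmorph_sum mulr_sumr.
  by apply: eq_bigr => i _; rewrite rmorphM mulrA.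
move=> h0.
have [T [hT hQ]] : exists T, ~ P T /\ forall i, exists e, v i * phi T = phi e.
  apply: common_den.
  - move=> i; have [a [t [ht e]]] := loc_frac (v i); exists t; split=> //; by exists a.
  - by move=> i r t [e he]; exists (r * e); rewrite !rmorphM -he; ring.
have [ef hef] := choice hQ.
have : phi (\sum_(i < n) ef i * s i) = 0.
  rewrite rmorph_sum; under eq_bigr do rewrite rmorphM -hef.
  transitivity (phi T * \sum_(i < n) v i * phi (s i)); last by rewrite h0 mulr0.
  rewrite mulr_sumr; by apply: eq_bigr => i _; ring.
move=> /loc_ker0 [u [hu eu]].
have [c hc] : exists c : 'I_m -> A, forall i, u * ef i = \sum_(j < m) c j * K j i.
  apply/hK; transitivity (u * \sum_(i < n) ef i * s i); last exact: eu.
  rewrite mulr_sumr.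
  by apply: eq_bigr => i _; rewrite mulrA.
have [iota hiota] := loc_unit (hPM hu hT).
exists (fun j => iota * phi (c j)) => i.
have -> : v i = iota * phi (u * ef i).
  transitivity (v i * (phi (u * T) * iota)); first by rewrite hiota mulr1.
  by rewrite !rmorphM -hef; ring.
rewrite hc rmorph_sum mulr_sumr; apply: eq_bigr => j _.
by rewrite rmorphM mulrA.
Qed.

End Localize.

Section Main.
Variable A : comNzRingType.

Lemma max_prime (P : A -> Prop) : maximal_ideal P ->
  forall s t, ~ P s -> ~ P t -> ~ P (s * t).
Proof.
move=> [hP hP1 hmax] s t hs ht hst.
pose J x := exists p c, P p /\ x = p + c * s.
have hJ : is_ideal J.
  split.
  - by exists 0, 0; split; [exact: ideal0 | rewrite mul0r addr0].
  - move=> x y [p1 [c1 [h1 ->]]] [p2 [c2 [h2 ->]]].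
    exists (p1 + p2), (c1 + c2); split; first exact: idealD.
    by ring.
  - move=> a x [p [c [h ->]]]; exists (a * p), (a * c); split; first exact: idealM.
    by ring.
have hPJ : forall x, P x -> J x.
  by move=> x hx; exists x, 0; split=> //; rewrite mul0r addr0.
have [hJP|hJ1] := hmax J hJ hPJ.
  by apply: hs; apply: hJP; exists 0, 1; split; [exact: ideal0 | rewrite mul1r add0r].
move: hJ1 => [p [c [hp e]]]; apply: ht.
have -> : t = p * t + c * (s * t) by rewrite mulrA -mulrDl -e mul1r.
by apply: idealD => //; [exact: idealMr | exact: idealM].
Qed.

Lemma exists_max (J : A -> Prop) : is_ideal J -> ~ J 1 ->
  exists P, maximal_ideal P /\ forall x, J x -> P x.
Proof.
move=> hJ hJ1.
pose T := {I : A -> Prop | [/\ is_ideal I, ~ I 1 & forall x, J x -> I x]}.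
pose t0 : T := exist _ J (And3 hJ hJ1 (fun x h => h)).
pose R (x y : T) := `[< forall a, proj1_sig x a -> proj1_sig y a >].
have [| | |t tmax] := @ZL_preorder T t0 R.
- by move=> x; apply/asboolP.
- by move=> x y z /asboolP h1 /asboolP h2; apply/asboolP => a /h1 /h2.
- move=> C Ctot; case: (pselect (exists t, C t)); last first.
    by move=> hne; exists t0 => s Cs; exfalso; apply: hne; exists s.
  move=> [c0 Cc0].
  pose U a := exists t, C t /\ proj1_sig t a.
  have hU : [/\ is_ideal U, ~ U 1 & forall x, J x -> U x].
    split.
    + split.
      * by exists c0; split=> //; case: (proj2_sig c0) => h _ _; exact: ideal0.
      * move=> x y [t1 [C1 h1]] [t2 [C2 h2]].
        case: (Ctot _ _ C1 C2) => /asboolP hle.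
          exists t2; split=> //; case: (proj2_sig t2) => h _ _.
          by apply: idealD => //; apply: hle.
        exists t1; split=> //; case: (proj2_sig t1) => h _ _.
        by apply: idealD => //; apply: hle.
      * move=> a x [t1 [C1 h1]]; exists t1; split=> //.
        by case: (proj2_sig t1) => h _ _; apply: idealM.
    + by move=> [t1 [C1 h1]]; case: (proj2_sig t1) => _ h _; apply: h.
    + by move=> x hx; exists c0; split=> //; case: (proj2_sig c0) => _ _ h; apply: h.
  exists (exist _ U hU) => s Cs; apply/asboolP => a h /=.
  by exists s.
case: t tmax => P [hP hP1 hJP] tmax.
exists P; split=> //; split=> // J' hJ' hPJ'.
case: (pselect (J' 1)) => hJ'1; first by right.
left; have hJ'T : [/\ is_ideal J', ~ J' 1 & forall x, J x -> J' x].
  by split=> // x /hJP /hPJ'.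
have hR : R (exist _ P (And3 hP hP1 hJP)) (exist _ J' hJ'T) by apply/asboolP.
by move: (tmax _ hR) => /asboolP.
Qed.

End Main.

Lemma dir1 (A : comNzRingType) : coherent A -> fqp_ring A ->
  forall P : A -> Prop, maximal_ideal P ->
  forall (B : comNzRingType) (phi : {rmorphism A -> B}),
  is_localization_at P phi -> fqp_ring B.
Proof.
move=> hcoh hfqp P hmax B phi hloc.
have hP1 : ~ P 1 by case: hmax.
have hPM := max_prime hmax.
move=> W hW [n [b hWb]].
have : forall i, exists p : A * A, ~ P p.2 /\ b i * phi p.2 = phi p.1.
  move=> i; have [a [t [ht e]]] := loc_frac hloc (b i); by exists (a, t).
move=> /choice [pf hpf].
pose V := ideal_span (fun i => (pf i).1).
have hV : is_ideal V by exact: span_ideal.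
have hVfg : fg_ideal V by exists n, (fun i => (pf i).1).
have [n' [s' [hVs' [m [K hK]]]]] := hcoh V hV hVfg.
have hs'V i : V (s' i) by apply/hVs'; exact: span_gen.
have hWs : forall x, W x <-> ideal_span (fun i => phi (s' i)) x.
  move=> x; split.
  - move=> /hWb; apply: span_sub; first exact: span_ideal.
    move=> i; have [u hu] := loc_unit hloc (proj1 (hpf i)).
    have -> : b i = u * phi (pf i).1.
      by rewrite -(proj2 (hpf i)) mulrC -mulrA hu mulr1.
    apply: idealM; first exact: span_ideal.
    by apply: span_map; apply/hVs'; exact: span_gen.
  - apply: span_sub => // i.
    have : ideal_span (fun i => phi (pf i).1) (phi (s' i)).
      by apply: span_map; exact: hs'V.
    apply: span_sub => // l.
    rewrite -(proj2 (hpf l)); apply: idealMr => //; apply/hWb; exact: span_gen.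
have hK' := loc_ker hP1 hPM hloc hK.
apply: (qp_from hW hWs hK') => X hX hXW y hy hKy.
have [T [hT hQ]] : exists T, ~ P T /\ forall i, exists z, V z /\ y i * phi T = phi z.
  apply: (common_den hP1 hPM).
  - move=> i; have := span_img hP1 hPM hloc hV hVs' (proj1 (hWs _) (hy i)).
    by move=> [x [t [hx ht e]]]; exists t; split=> //; exists x.
  - move=> i r t [z [hz e]]; exists (r * z); split; first exact: idealM.
    by rewrite !rmorphM -e; ring.
have /choice [z hz] := hQ.
pose XA x := V x /\ X (phi x).
have hXA : is_ideal XA.
  split.
  - by split; [exact: ideal0 | rewrite rmorph0; exact: ideal0].
  - move=> x1 x2 [h1 h1'] [h2 h2']; split; first exact: idealD.
    by rewrite rmorphD; exact: idealD.
  - move=> a x [h h']; split; first exact: idealM.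
    by rewrite rmorphM; exact: idealM.
have hqpV : quasi_projective_ideal V.
  exact: hfqp.
have hKz : forall j, XA (\sum_(i < n') K j i * z i).
  move=> j; split.
    by apply: ideal_sum => // i _; apply: idealM => //; case: (hz i).
  have -> : phi (\sum_(i < n') K j i * z i) = phi T * \sum_(i < n') phi (K j i) * y i.
    rewrite rmorph_sum mulr_sumr; apply: eq_bigr => i _.
    by rewrite rmorphM -(proj2 (hz i)); ring.
  by apply: idealM => //; apply: hKy.
have [w [hwV hKw hwX]] := qp_to hV hVs' hK hqpV hXA (fun x hx => proj1 hx)
  (fun i => proj1 (hz i)) hKz.
  have [iota hiota] := loc_unit hloc hT.
  exists (fun i => phi (w i) * iota); split.
  - move=> i; apply: idealMr => //; apply/hWs; apply: span_map; exact/hVs'.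
  - move=> j; transitivity (iota * phi (\sum_(i < n') K j i * w i)).
      rewrite rmorph_sum mulr_sumr; apply: eq_bigr => i _.
      by rewrite rmorphM; ring.
    by rewrite hKw rmorph0 mulr0.
  - move=> i; have -> : phi (w i) * iota - y i = iota * phi (w i - z i).
      rewrite rmorphB -(proj2 (hz i)).
      transitivity (phi (w i) * iota - y i * (phi T * iota)); first by rewrite hiota mulr1.
      by ring.
    by apply: idealM => //; case: (hwX i).
Qed.

Lemma dir2 (A : comNzRingType) : coherent A ->
  (forall P : A -> Prop, maximal_ideal P ->
   forall (B : comNzRingType) (phi : {rmorphism A -> B}),
   is_localization_at P phi -> fqp_ring B) -> fqp_ring A.
Proof.
move=> hcoh hloc V hV hVfg.
have [n [s [hVs [m [K hK]]]]] := hcoh V hV hVfg.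
have hsV i : V (s i) by apply/hVs; exact: span_gen.
apply: (qp_from hV hVs hK) => X hX hXV y hy hKy.
pose J a := exists w : 'I_n -> A,
  [/\ (forall i, V (w i)), (forall j, \sum_(i < n) K j i * w i = 0) &
      (forall i, X (w i - a * y i))].
suff : J 1.
  by move=> [w [h1 h2 h3]]; exists w; split=> // i; rewrite -[y i]mul1r.
have hJ : is_ideal J.
  split.
  - exists (fun _ => 0); split.
    + by move=> i; exact: ideal0.
    + by move=> j; rewrite big1 // => i _; rewrite mulr0.
    + by move=> i; rewrite mul0r subr0; exact: ideal0.
  - move=> a b [w1 [h1 h2 h3]] [w2 [h1' h2' h3']].
    exists (fun i => w1 i + w2 i); split.
    + by move=> i; apply: idealD.
    + move=> j; under eq_bigr do rewrite mulrDr.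
      by rewrite big_split /= h2 h2' addr0.
    + move=> i; have -> : w1 i + w2 i - (a + b) * y i =
        (w1 i - a * y i) + (w2 i - b * y i) by ring.
      by apply: idealD.
  - move=> c a [w [h1 h2 h3]]; exists (fun i => c * w i); split.
    + by move=> i; apply: idealM.
    + move=> j; transitivity (c * \sum_(i < n) K j i * w i); last by rewrite h2 mulr0.
      by rewrite mulr_sumr; apply: eq_bigr => i _; ring.
    + move=> i; have -> : c * w i - c * a * y i = c * (w i - a * y i) by ring.
      by apply: idealM.
case: (pselect (J 1)) => // hJ1; exfalso.
have [P [hmax hJP]] := exists_max hJ hJ1.
have hP1 : ~ P 1 by case: hmax.
have hP0 : P 0 by case: hmax => h _ _; exact: ideal0.
have hPM := max_prime hmax.
pose S := MSet hP1 hPM hP0.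
have hlocS : is_localization_at P (lphiR S) := lphi_loc S.
set B := loc S in hlocS.
set phi := lphiR S in hlocS.
have hfqpB := hloc P hmax B phi hlocS.
pose V' := ideal_span (fun i => phi (s i)).
have hV' : is_ideal V' by exact: span_ideal.
have hqpV' : quasi_projective_ideal V'.
  by apply: hfqpB => //; exists n, (fun i => phi (s i)).
have hK' := loc_ker hP1 hPM hlocS hK.
pose X' := img phi P X.
have hX' : is_ideal X' by exact: img_ideal.
have hX'V' : forall b, X' b -> V' b.
  move=> b [x [t [hx ht e]]]; apply: (img_span hlocS hVs).
  by exists x, t; split=> //; apply: hXV.
have hy' : forall i, V' (phi (y i)) by move=> i; apply: span_map; apply/hVs.
have hKy' : forall j, X' (\sum_(i < n) phi (K j i) * phi (y i)).
  move=> j; have -> : \sum_(i < n) phi (K j i) * phi (y i) = phi (\sum_(i < n) K j i * y i).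
    by rewrite rmorph_sum; apply: eq_bigr => i _; rewrite rmorphM.
  by apply: img_phi.
have [w' [hw'V hKw' hw'X]] := qp_to hV' (fun x => iff_refl _) hK' hqpV' hX' hX'V' hy' hKy'.
have [T [hT hQ]] : exists T, ~ P T /\ forall i, exists z, V z /\ w' i * phi T = phi z.
  apply: (common_den hP1 hPM).
  - move=> i; have := span_img hP1 hPM hlocS hV hVs (hw'V i).
    by move=> [x [t [hx ht e]]]; exists t; split=> //; exists x.
  - move=> i r t [z [hz e]]; exists (r * z); split; first exact: idealM.
    by rewrite !rmorphM -e; ring.
have /choice [z hz] := hQ.
have [U [hU hUQ]] : exists U, ~ P U /\ forall j, U * (\sum_(i < n) K j i * z i) = 0.
  apply: (common_den hP1 hPM (Q := fun j u => u * (\sum_(i < n) K j i * z i) = 0)).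
  - move=> j; apply: (loc_ker0 hlocS).
    transitivity (phi T * \sum_(i < n) phi (K j i) * w' i); last by rewrite hKw' mulr0.
    rewrite rmorph_sum mulr_sumr; apply: eq_bigr => i _.
    by rewrite rmorphM -(proj2 (hz i)); ring.
  - by move=> j r t e; rewrite -mulrA e mulr0.
have [S' [hS' hSQ]] : exists S', ~ P S' /\ forall i, X (S' * (z i - T * y i)).
  apply: (common_den hP1 hPM (Q := fun i u => X (u * (z i - T * y i)))).
  - move=> i; have [x [r [hx hr e]]] := hw'X i.
    have : phi (r * z i - T * r * y i - T * x) = 0.
      rewrite !rmorphB !rmorphM -(proj2 (hz i)) -e; ring.
    move=> /(loc_ker0 hlocS) [q [hq eq]].
    exists (q * r); split; first by apply: (hPM).
    have -> : q * r * (z i - T * y i) = q * (r * z i - T * r * y i - T * x) + q * T * x.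
      by ring.
    by rewrite eq add0r; apply: idealM.
  - by move=> i r t h; rewrite -mulrA; apply: idealM.
have : J (U * S' * T).
  exists (fun i => U * S' * z i); split.
  - by move=> i; apply: idealM => //; case: (hz i).
  - move=> j; transitivity (S' * (U * \sum_(i < n) K j i * z i)); last by rewrite hUQ mulr0.
    by rewrite !mulr_sumr; apply: eq_bigr => i _; ring.
  - move=> i; have -> : U * S' * z i - U * S' * T * y i = U * (S' * (z i - T * y i)) by ring.
    by apply: idealM.
move=> /hJP; apply: (hPM); last exact: hT.
by apply: (hPM).
Qed.

Theorem proposition4p4 (A : comNzRingType) :
  coherent A ->
  (fqp_ring A <->
   forall P : A -> Prop, maximal_ideal P ->
   forall (B : comNzRingType) (phi : {rmorphism A -> B}),
     is_localization_at P phi -> fqp_ring B).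
Proof.
move=> hcoh; split; first exact: dir1.
exact: dir2.
Qed.
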